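(* Let $T=(T_a,T_b)$ be a rooted binary tree on $n$ leaves, where $T_a$ and $T_b$ have $n_a$ and $n_b$ leaves respectively. If $n_a\neq n_b$ and both $n_a$ and $n_b$ are odd, then $\mathcal{C}(T)>c_n$, i.e. $T$ does not have minimal Colless index.
   Context: A rooted binary tree with $n\geq 2$ leaves is a rooted tree whose root has degree 2 and all other internal nodes have degree 3; for $n=1$ it is a single node. $T=(T_a,T_b)$ denotes the decomposition into the two subtrees rooted at the children of the root. For an internal node $v$ with children $v_1,v_2$, let $\kappa(v_i)$ be the number of leaves descending from $v_i$ ($1$ if a leaf). The Colless index is $\mathcal{C}(T)=\sum_v|\kappa(v_1)-\kappa(v_2)|$ over internal nodes $v$; $c_n$ is the minimum of $\mathcal{C}$ over rooted binary trees with $n$ leaves. *)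

(* Defs.v *)
From mathcomp Require Import all_boot.
Set Implicit Arguments. Unset Strict Implicit. Unset Printing Implicit Defensive.

Inductive tree : Type :=
| Leaf : tree
| Node : tree -> tree -> tree.

Fixpoint leaves (t : tree) : nat :=
  match t with
  | Leaf => 1
  | Node a b => leaves a + leaves b
  end.

Definition absdiff (m n : nat) : nat := (m - n) + (n - m).

(* Colless index: sum over internal nodes v of |kappa(v1) - kappa(v2)| *)
Fixpoint colless (t : tree) : nat :=
  match t with
  | Leaf => 0
  | Node a b => absdiff (leaves a) (leaves b) + colless a + colless b
  end.

Fixpoint trees_upto (d : nat) : seq tree :=
  match d with
  | 0 => [:: Leaf]
  | d'.+1 => Leaf :: [seq Node a b | a <- trees_upto d', b <- trees_upto d']
  end.

(* Trees with n leaves have height < n, so this lists every tree with n leaves. *)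
Definition trees_with (n : nat) : seq tree :=
  [seq t <- trees_upto n | leaves t == n].

(* c_n : minimum Colless index over rooted binary trees with n leaves
   (meaningful for n >= 1; the list is empty for n = 0). *)
Definition min_colless (n : nat) : nat :=
  let cs := [seq colless t | t <- trees_with n] in foldr minn (foldr maxn 0 cs) cs.

(* Main.v *)
Require Import Defs.
From mathcomp Require Import all_boot.
From mathcomp Require Import zify.

Fixpoint balf (f n : nat) : tree :=
  match f with
  | 0 => Leaf
  | f'.+1 => if n <= 1 then Leaf else Node (balf f' (uphalf n)) (balf f' n./2)
  end.

Lemma leaves_balf f n : 1 <= n <= f -> leaves (balf f n) = n.
Proof.
elim: f n => [|f IH] n H /=; first lia.
case: ifP => Hn /=; first lia.
rewrite !IH; lia.
Qed.

Lemma colless_balf f g n : n <= f -> n <= g -> colless (balf f n) = colless (balf g n).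
Proof.
elim: f g n => [|f IH] [|g] n H1 H2 /=; try lia.
- by case: ifP => //; lia.
- by case: ifP => //; lia.
case: ifP => Hn //=.
rewrite (IH g (uphalf n)); try lia.
rewrite (IH g n./2); try lia.
by rewrite !leaves_balf; lia.
Qed.

Definition c n := colless (balf n n).

Lemma c0 : c 0 = 0. Proof. by []. Qed.
Lemma c1 : c 1 = 0. Proof. by []. Qed.

Lemma c_gen n : 2 <= n -> c n = c (uphalf n) + c n./2 + absdiff (uphalf n) n./2.
Proof.
move=> Hn; rewrite /c.
case: n Hn => [|n] Hn //.
have E : balf n.+1 n.+1 = Node (balf n (uphalf n.+1)) (balf n (n.+1)./2).
  rewrite [LHS]/=; case: ifP => //; lia.
rewrite E.
change (colless (Node (balf n (uphalf n.+1)) (balf n (n.+1)./2))) with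
  (absdiff (leaves (balf n (uphalf n.+1))) (leaves (balf n (n.+1)./2))
   + colless (balf n (uphalf n.+1)) + colless (balf n (n.+1)./2)).
rewrite !leaves_balf; try lia.
rewrite (@colless_balf n (uphalf n.+1) (uphalf n.+1)); try lia.
rewrite (@colless_balf n (n.+1./2) (n.+1./2)); try lia.
Qed.

Lemma c_even k : c (2 * k) = 2 * c k.
Proof.
case: k => [|k]; first by [].
rewrite c_gen; last lia.
have -> : uphalf (2 * k.+1) = k.+1 by lia.
have -> : (2 * k.+1)./2 = k.+1 by lia.
rewrite /absdiff; lia.
Qed.

Lemma c_odd k : 1 <= k -> c (2 * k).+1 = c k + c k.+1 + 1.
Proof.
move=> Hk; rewrite c_gen; last lia.
have -> : uphalf (2 * k).+1 = k.+1 by lia.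
have -> : (2 * k).+1./2 = k by lia.
rewrite /absdiff; lia.
Qed.

Lemma Lineq n : forall a b, a + b = n -> c n <= c a + c b + absdiff a b.
Proof.
elim: n {-2}n (leqnn n) => [|N IHN] n Hn a b Hab.
  have -> : n = 0 by lia. by rewrite c0.
have IH : forall m a b, m < n -> a + b = m -> c m <= c a + c b + absdiff a b.
  move=> m a' b' Hm Hab'; apply: (IHN m) => //; lia.
have key : forall a b, a + b = n -> ~~ odd a -> odd b -> c n <= c a + c b + absdiff a b.
  move=> a' b' Hab' Ha Hb.
  have [x Hx] : exists x, a' = 2 * x by exists a'./2; lia.
  have [y Hy] : exists y, b' = (2 * y).+1 by exists b'./2; lia.
  subst a' b'.
  rewrite c_even.
  case: (posnP y) => Hy.
    subst y; rewrite c1.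
    case: (posnP x) => Hx.
      have -> : n = 1 by lia. by rewrite c1.
    have -> : n = (2 * x).+1 by lia.
    rewrite c_odd //.
    have := IH x.+1 x 1 ltac:(lia) ltac:(lia); rewrite c1 /absdiff; lia.
  have -> : n = (2 * (x + y)).+1 by lia.
  rewrite c_odd; last lia.
  rewrite c_odd //.
  have := IH (x + y) x y ltac:(lia) ltac:(lia).
  have := IH (x + y).+1 x y.+1 ltac:(lia) ltac:(lia).
  rewrite /absdiff; lia.
have [x Hx] : exists x, a = 2 * x + odd a by exists a./2; lia.
have [y Hy] : exists y, b = 2 * y + odd b by exists b./2; lia.
case Ea: (odd a) Hx => Hx; case Eb: (odd b) Hy => Hy.
-
  rewrite addn1 in Hx; rewrite addn1 in Hy; subst a b.
  have -> : n = 2 * (x + y).+1 by lia.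
  rewrite c_even.
  case: (posnP x) => Hx0; case: (posnP y) => Hy0.
  + subst; by [].
  + subst x; rewrite ?add0n ?addn0 c_odd //.
    have := IH y.+1 y 1 ltac:(lia) ltac:(lia); rewrite c1 /absdiff; lia.
  + subst y; rewrite ?add0n ?addn0 c_odd //.
    have := IH x.+1 x 1 ltac:(lia) ltac:(lia); rewrite c1 /absdiff; lia.
  + rewrite !c_odd //.
    have := IH (x + y).+1 x y.+1 ltac:(lia) ltac:(lia).
    have := IH (x + y).+1 x.+1 y ltac:(lia) ltac:(lia).
    rewrite /absdiff; lia.
- have := key b a ltac:(lia) ltac:(by rewrite Eb) ltac:(by rewrite Ea).
  rewrite /absdiff; lia.
- apply: key => //; by rewrite ?Ea ?Eb.
- rewrite addn0 in Hx; rewrite addn0 in Hy; subst a b.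
  case: (posnP (x + y)) => H0.
    have -> : n = 0 by lia. by rewrite c0.
  have -> : n = 2 * (x + y) by lia.
  rewrite !c_even.
  have := IH (x + y) x y ltac:(lia) ltac:(lia).
  rewrite /absdiff; lia.
Qed.

Lemma Sineq a b : odd a -> odd b -> a != b -> c (a + b) < c a + c b + absdiff a b.
Proof.
move=> Ha Hb Hne.
have [x Hx] : exists x, a = (2 * x).+1 by exists a./2; lia.
have [y Hy] : exists y, b = (2 * y).+1 by exists b./2; lia.
subst a b.
have -> : (2 * x).+1 + (2 * y).+1 = 2 * (x + y).+1 by lia.
rewrite c_even.
case: (posnP x) => Hx0; case: (posnP y) => Hy0.
+ subst; by [].
+ subst x; rewrite ?add0n ?addn0 c_odd //.
  have := @Lineq (y.+1) y 1 ltac:(lia); rewrite c1 /absdiff; lia.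
+ subst y; rewrite ?add0n ?addn0 c_odd //.
  have := @Lineq (x.+1) x 1 ltac:(lia); rewrite c1 /absdiff; lia.
+ rewrite !c_odd //.
  have := @Lineq ((x + y).+1) x y.+1 ltac:(lia).
  have := @Lineq ((x + y).+1) x.+1 y ltac:(lia).
  move/eqP: Hne => Hne.
  rewrite /absdiff; lia.
Qed.

Lemma lower t : c (leaves t) <= colless t.
Proof.
elim: t => [|a IHa b IHb] //=.
have := @Lineq (leaves a + leaves b) (leaves a) (leaves b) erefl.
lia.
Qed.

Lemma in_allpairs (f : tree -> tree -> tree) (s t : seq tree) x y :
  List.In x s -> List.In y t -> List.In (f x y) [seq f a b | a <- s, b <- t].
Proof.
elim: s => [|z s IH] //= [->|Hx] Hy.
  apply: List.in_or_app; left; exact: List.in_map.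
apply: List.in_or_app; right; exact: IH.
Qed.

Lemma balf_in f n : List.In (balf f n) (trees_upto f).
Proof.
elim: f n => [|f IH] n /=; first by left.
case: ifP => _; first by left.
right; apply: in_allpairs; exact: IH.
Qed.

Lemma foldr_minn_le (s : seq nat) d x : List.In x s -> foldr minn d s <= x.
Proof.
elim: s => [|z s IH] //= [->|Hx]; first exact: geq_minl.
exact: leq_trans (geq_minr _ _) (IH Hx).
Qed.

Lemma in_map_seq (A B : Type) (f : A -> B) (s : seq A) x :
  List.In x s -> List.In (f x) (map f s).
Proof. elim: s => [|z s IH] //= [->|Hx]; [by left | right; exact: IH]. Qed.

Lemma in_filter_seq (A : Type) (p : pred A) (s : seq A) x :
  List.In x s -> p x -> List.In x (filter p s).
Proof.
elim: s => [|z s IH] //= [->|Hx] Hp; first by rewrite Hp; left.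
case: (p z); [right|]; exact: IH.
Qed.

Lemma min_colless_le n : 1 <= n -> min_colless n <= c n.
Proof.
move=> Hn; rewrite /min_colless; apply: foldr_minn_le.
apply: in_map_seq.
rewrite /trees_with.
apply: in_filter_seq; first exact: balf_in.
by rewrite leaves_balf ?Hn ?leqnn.
Qed.

Lemma leaves_pos t : 1 <= leaves t.
Proof. elim: t => //= a Ha b Hb; lia. Qed.

Theorem theorem7 (Ta Tb : tree) :
  leaves Ta != leaves Tb ->
  odd (leaves Ta) -> odd (leaves Tb) ->
  min_colless (leaves (Node Ta Tb)) < colless (Node Ta Tb).
Proof.
move=> Hne Ha Hb.
have H1 := @min_colless_le (leaves (Node Ta Tb)) ltac:(have := leaves_pos Ta; simpl; lia).
have H2 := @Sineq _ _ Ha Hb Hne.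
have H3 := lower Ta; have H4 := lower Tb.
simpl in *; lia.
Qed.
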